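(* Let $S$ be a standard quantum entity on a finite-dimensional complex Hilbert space $\mathcal{H}$ with set of states $\Sigma$. For $K\subseteq\Sigma$ let $L=\{c: p_{\bar c}\in K\}$. Then $K^\perp=\{p_{\bar c}: c\in L^\perp\}$ and $cl_{orth}(K)=\{p_{\bar c}: c\in cl(L)\}$, where $L^\perp$ is the orthogonal complement and $cl(L)=(L^\perp)^\perp$ the closed linear span of $L$ in $\mathcal{H}$. If $L$ is a closed subspace of $\mathcal{H}$ and $F=\{p_{\bar c}:c\in L\}$, then $F\in\mathcal{F}_{orth}$. Moreover $\mathcal{F}_{eig}=\mathcal{F}_{orth}$.
   Context: A spectral family of $\mathcal{H}$ is a set $E=\{E_1,\dots,E_r\}$ of pairwise orthogonal nonzero orthogonal projections with $\sum_kE_k=I$. The standard quantum entity has states $p_{\bar c}$ (one per ray $\bar c$, generated by a unit vector $c$), experiments $e_E$ (one per spectral family $E$), outcomes $x_{E_k}$ (one per orthogonal projection), and $O(e_E,p_{\bar c})=\{x_{E_k}:E_k\in E,E_kc\neq0\}$. State orthogonality: $p\perp q$ iff some experiment $e$ has $O(e,p)\cap O(e,q)=\emptyset$. For $K\subseteq\Sigma$, $K^\perp=\{p\in\Sigma:p\perp q\text{ for all }q\in K\}$, $cl_{orth}(K)=(K^\perp)^\perp$, and $\mathcal{F}_{orth}$ is the set of $K$ with $cl_{orth}(K)=K$. State eigen closure system: for an experiment $e$ with outcome set $O(e)=\bigcup_pO(e,p)$ and $A\subseteq O(e)$, $eig_e(A)=\{p: O(e,p)\subseteq A\}$; $\mathcal{F}_{eig}$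 is the set of all intersections of families of sets $eig_e(A)$ ($e$ ranging over experiments). *)

(* Defs.v *)
From Stdlib Require Import Reals.
From mathcomp Require Import all_boot all_order all_algebra.
From mathcomp Require Import complex Rstruct.
Set Implicit Arguments. Unset Strict Implicit. Unset Printing Implicit Defensive.
Import GRing.Theory Num.Theory.
Local Open Scope ring_scope.

Definition CC : numClosedFieldType := (Rdefinitions.R)[i]%type.

(* ---------- Generic entity: states St, experiments Ex, outcomes Out,
   O e p = set of possible outcomes of e in state p. ---------- *)
Section Entity.
Variables (St Ex Out : Type) (O : Ex -> St -> Out -> Prop).

Definition orth (p q : St) : Prop :=
  exists e : Ex, forall x : Out, ~ (O e p x /\ O e q x).

Definition sperp (K : St -> Prop) : St -> Prop :=
  fun p => forall q, K q -> orth p q.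

Definition cl_orth (K : St -> Prop) : St -> Prop := sperp (sperp K).

Definition F_orth (K : St -> Prop) : Prop := cl_orth K = K.

Definition outcomes (e : Ex) : Out -> Prop := fun x => exists p, O e p x.

Definition eig (e : Ex) (A : Out -> Prop) : St -> Prop :=
  fun p => forall x, O e p x -> A x.

(* K in F_eig: K is the intersection of a family of sets eig_e(A), A subset O(e)
   (the empty family has intersection the whole state space). *)
Definition F_eig (K : St -> Prop) : Prop :=
  exists FF : (St -> Prop) -> Prop,
    (forall X, FF X -> exists (e : Ex) (A : Out -> Prop),
        (forall x, A x -> outcomes e x) /\ X = eig e A) /\
    K = (fun p => forall X, FF X -> X p).

End Entity.

Section Quantum.
Variable n : nat.

Definition dotp (u v : 'cV[CC]_n) : CC := \sum_(i < n) (u i 0)^* * v i 0.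

Definition unitv (c : 'cV[CC]_n) : Prop := dotp c c = 1.

Definition vperp (L : 'cV[CC]_n -> Prop) : 'cV[CC]_n -> Prop :=
  fun v => forall u, L u -> dotp u v = 0.

Definition vcl (L : 'cV[CC]_n -> Prop) : 'cV[CC]_n -> Prop := vperp (vperp L).

Definition subspace (L : 'cV[CC]_n -> Prop) : Prop :=
  L 0 /\ (forall (a : CC) u v, L u -> L v -> L (a *: u + v)).

Definition closed_set (L : 'cV[CC]_n -> Prop) : Prop :=
  forall c, (forall eps : CC, 0 < eps -> exists d, L d /\ dotp (c - d) (c - d) < eps) -> L c.

Definition closed_subspace (L : 'cV[CC]_n -> Prop) : Prop :=
  subspace L /\ closed_set L.

Definition ray (c : 'cV[CC]_n) : 'cV[CC]_n -> Prop := fun v => exists a : CC, v = a *: c.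

Record state := State {
  st_ray : 'cV[CC]_n -> Prop ;
  st_ok : exists c, unitv c /\ st_ray = ray c }.

Definition is_pbar (c : 'cV[CC]_n) (s : state) : Prop := unitv c /\ st_ray s = ray c.

Definition adjmx (A : 'M[CC]_n) : 'M[CC]_n := (map_mx Num.conj A)^T.

Definition orth_proj (P : 'M[CC]_n) : Prop := P *m P = P /\ adjmx P = P.

Definition spectral_family (E : seq 'M[CC]_n) : Prop :=
  [/\ uniq E,
      forall P, P \in E -> orth_proj P /\ P <> 0,
      forall P Q, P \in E -> Q \in E -> P <> Q -> P *m Q = 0
    & \sum_(P <- E) P = 1%:M].

(* experiments: one per spectral family; outcomes: the orthogonal projections *)
Definition experiment := {E : seq 'M[CC]_n | spectral_family E}.

Definition stdO (e : experiment) (s : state) (x : 'M[CC]_n) : Prop :=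
  x \in proj1_sig e /\ exists c, is_pbar c s /\ x *m c <> 0.

Definition pbar_set (M : 'cV[CC]_n -> Prop) : state -> Prop :=
  fun s => exists c, M c /\ is_pbar c s.

Definition vecs_of (K : state -> Prop) : 'cV[CC]_n -> Prop :=
  fun c => exists s, K s /\ is_pbar c s.

End Quantum.

(* Main.v *)
Require Import Defs.
From Stdlib Require Import Reals.
From mathcomp Require Import all_boot all_order all_algebra.
From mathcomp Require Import complex Rstruct.
From Stdlib Require Import Classical FunctionalExtensionality PropExtensionality Lia.
From mathcomp Require Import zify.
Set Implicit Arguments. Unset Strict Implicit. Unset Printing Implicit Defensive.
Import GRing.Theory Num.Theory.
Local Open Scope ring_scope.

Lemma dotpC {n} (u v : 'cV[CC]_n) : dotp v u = (dotp u v)^*.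
Proof.
rewrite /dotp rmorph_sum; apply: eq_bigr => i _.
by rewrite rmorphM /= conjCK mulrC.
Qed.

Lemma dotp_eq0C {n} (u v : 'cV[CC]_n) : dotp u v = 0 -> dotp v u = 0.
Proof. by move=> H; rewrite dotpC H rmorph0. Qed.

Lemma dotpDr {n} (u v w : 'cV[CC]_n) : dotp u (v + w) = dotp u v + dotp u w.
Proof. by rewrite /dotp -big_split; apply: eq_bigr => i _; rewrite mxE mulrDr. Qed.

Lemma dotpZr {n} a (u v : 'cV[CC]_n) : dotp u (a *: v) = a * dotp u v.
Proof. by rewrite /dotp mulr_sumr; apply: eq_bigr => i _; rewrite mxE mulrCA. Qed.

Lemma dotpZl {n} a (u v : 'cV[CC]_n) : dotp (a *: u) v = a^* * dotp u v.
Proof. by rewrite /dotp mulr_sumr; apply: eq_bigr => i _; rewrite mxE rmorphM mulrA. Qed.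

Lemma dotp0r {n} (u : 'cV[CC]_n) : dotp u 0 = 0.
Proof. by rewrite /dotp big1 // => i _; rewrite mxE mulr0. Qed.

Lemma dotp0l {n} (u : 'cV[CC]_n) : dotp 0 u = 0.
Proof. by rewrite /dotp big1 // => i _; rewrite mxE rmorph0 mul0r. Qed.

Lemma dotpNr {n} (u v : 'cV[CC]_n) : dotp u (- v) = - dotp u v.
Proof. by rewrite -scaleN1r dotpZr mulN1r. Qed.

Lemma dotpBr {n} (u v w : 'cV[CC]_n) : dotp u (v - w) = dotp u v - dotp u w.
Proof. by rewrite dotpDr dotpNr. Qed.

Lemma dotp_sumr {n} (I : Type) (s : seq I) (F : I -> 'cV[CC]_n) u :
  dotp u (\sum_(x <- s) F x) = \sum_(x <- s) dotp u (F x).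
Proof.
elim: s => [|x s IH]; first by rewrite !big_nil dotp0r.
by rewrite !big_cons dotpDr IH.
Qed.

Lemma dotp_ge0 {n} (u : 'cV[CC]_n) : 0 <= dotp u u.
Proof. by apply: sumr_ge0 => i _; rewrite mulrC mul_conjC_ge0. Qed.

Lemma dotp_eq0 {n} (u : 'cV[CC]_n) : dotp u u = 0 -> u = 0.
Proof.
move=> H; apply/matrixP => i j; rewrite (ord1 j) mxE.
have := (@psumr_eq0P _ _ predT (fun i => (u i 0)^* * u i 0)) _ H i isT.
move=> /(_ (fun i _ => ltac:(rewrite mulrC; exact: mul_conjC_ge0))).
by move/eqP; rewrite mulrC mul_conjC_eq0 => /eqP.
Qed.

Definition adjv {n} (c : 'cV[CC]_n) : 'rV[CC]_n := (map_mx Num.conj c)^T.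

Lemma adjv_mul {n} (c v : 'cV[CC]_n) : adjv c *m v = (dotp c v)%:M.
Proof.
apply/matrixP => i j; rewrite (ord1 i) (ord1 j) !mxE /dotp.
by apply: eq_bigr => k _; rewrite !mxE.
Qed.

Lemma dotp_adj {n} (A : 'M[CC]_n) (u v : 'cV[CC]_n) :
  dotp u (A *m v) = dotp (adjmx A *m u) v.
Proof.
rewrite /dotp.
under eq_bigr do rewrite mxE mulr_sumr.
under [RHS]eq_bigr do rewrite mxE rmorph_sum mulr_suml.
rewrite exchange_big /=; apply: eq_bigr => i _; apply: eq_bigr => j _.
by rewrite !mxE rmorphM /= conjCK mulrA [_^* * _]mulrC.
Qed.

Lemma unitv_neq0 {n} (c : 'cV[CC]_n) : unitv c -> c <> 0.
Proof. by move=> Hc Hc0; move: Hc; rewrite /unitv Hc0 dotp0l => /eqP; rewrite eq_sym oner_eq0. Qed.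

Lemma normalize {n} (v : 'cV[CC]_n) : v <> 0 ->
  exists a : CC, a != 0 /\ unitv (a *: v).
Proof.
move=> Hv; set r := dotp v v.
have r0 : r != 0 by apply/eqP => /dotp_eq0.
have rge : 0 <= r by apply: dotp_ge0.
have sge : 0 <= sqrtC r by rewrite sqrtC_ge0.
have s0 : sqrtC r != 0 by rewrite sqrtC_eq0.
exists (sqrtC r)^-1; split; first by rewrite invr_eq0.
rewrite /unitv dotpZl dotpZr -/r geC0_conj ?invr_ge0 //.
rewrite mulrA -expr2 exprVn sqrtCK mulVf //.
Qed.

Lemma pbar_unique {n} (c d : 'cV[CC]_n) s : is_pbar c s -> is_pbar d s -> exists a, d = a *: c.
Proof.
move=> [_ Hc] [_ Hd]; have : st_ray s d by rewrite Hd; exists 1; rewrite scale1r.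
by rewrite Hc.
Qed.

Definition mkstate {n} (c : 'cV[CC]_n) (Hc : unitv c) : state n :=
  @State n (ray c) (ex_intro _ c (conj Hc erefl)).

Lemma mkstateP {n} (c : 'cV[CC]_n) (Hc : unitv c) : is_pbar c (mkstate Hc).
Proof. by split. Qed.

Lemma state_rep {n} (s : state n) : exists c, is_pbar c s.
Proof. by case: s => r [c [Hc Hr]]; exists c; split. Qed.

Lemma stdO_rep {n} (e : experiment n) s x c : is_pbar c s ->
  (stdO e s x <-> x \in sval e /\ x *m c <> 0).
Proof.
move=> Hc; split.
  move=> [xE [d [Hd Hxd]]]; split => // Hxc; apply: Hxd.
  by have [a ->] := pbar_unique Hc Hd; rewrite -scalemxAr Hxc scaler0.
by move=> [xE Hxc]; split => //; exists c.
Qed.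

Definition projv {n} (c : 'cV[CC]_n) : 'M[CC]_n := c *m adjv c.

Lemma projv_mul {n} (c v : 'cV[CC]_n) : projv c *m v = dotp c v *: c.
Proof. by rewrite /projv -mulmxA adjv_mul mul_mx_scalar. Qed.

Lemma adjmx_sub {n} (A : 'M[CC]_n) : adjmx (1%:M - A) = 1%:M - adjmx A.
Proof.
apply/matrixP => i j; rewrite !mxE rmorphB /=; congr (_ - _).
by rewrite eq_sym; case: (i == j); rewrite /= ?rmorph1 ?rmorph0.
Qed.

Lemma projv_orth {n} (c : 'cV[CC]_n) : unitv c -> orth_proj (projv c) /\ projv c <> 0.
Proof.
move=> Hc; split; first split.
- by rewrite {2}/projv mulmxA projv_mul -scalemxAl Hc scale1r.
- apply/matrixP => i j; rewrite !mxE big_ord1 !mxE rmorphM /= conjCK mulrC.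
  by rewrite big_ord1 !mxE.
- move=> H0; apply: (unitv_neq0 Hc).
  by rewrite -[c]scale1r -Hc -projv_mul H0 mul0mx.
Qed.

Lemma exp_of {n} (P : 'M[CC]_n) : orth_proj P -> P <> 0 ->
  exists e : experiment n, P \in sval e /\
    (forall x, x \in sval e -> x = P \/ x = 1%:M - P).
Proof.
move=> [PP PA] P0.
have Q_orth : orth_proj (1%:M - P).
  split; last by rewrite adjmx_sub PA.
  by rewrite mulmxBl mul1mx mulmxBr mulmx1 PP subrr subr0.
have PQ : P *m (1%:M - P) = 0 by rewrite mulmxBr mulmx1 PP subrr.
have QP : (1%:M - P) *m P = 0 by rewrite mulmxBl mul1mx PP subrr.
case: (eqVneq P 1%:M) => HP.
  have sf : spectral_family [:: P].
    split => //.
    - by move=> Q; rewrite inE => /eqP ->.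
    - by move=> Q R; rewrite !inE => /eqP -> /eqP ->.
    - by rewrite big_cons big_nil addr0.
  exists (exist _ _ sf); split; first by rewrite /= inE.
  move=> x; rewrite /= inE => /eqP Hx; left; exact Hx.
have Q0 : 1%:M - P <> 0 by move/eqP; rewrite subr_eq0 eq_sym (negPf HP).
have sf : spectral_family [:: P; 1%:M - P].
  split.
  - rewrite /= andbT inE; apply/eqP => E.
    by apply: P0; rewrite -PQ -E PP.
  - by move=> Q; rewrite !inE => /orP [] /eqP ->.
  - move=> Q R; rewrite !inE => /orP [] /eqP -> /orP [] /eqP -> //.
  - by rewrite big_cons big_cons big_nil addr0 addrC subrK.
exists (exist _ _ sf); split; first by rewrite /= inE eqxx.
move=> x; rewrite /= !inE => /orP [] /eqP Hx; [left|right]; exact Hx.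
Qed.

Lemma orth_iff {n} (c d : 'cV[CC]_n) s t : is_pbar c s -> is_pbar d t ->
  (orth (@stdO n) s t <-> dotp c d = 0).
Proof.
move=> Hc Hd; split.
  move=> [[E [uE PE OE sE]] He].
  have H : forall x, x \in E -> x *m c = 0 \/ x *m d = 0.
    move=> x xE; apply: NNPP => Hn; apply: (He x); split.
      by apply/(stdO_rep _ _ Hc); split => // Hx; apply: Hn; left.
    by apply/(stdO_rep _ _ Hd); split => // Hx; apply: Hn; right.
  rewrite -[d]mul1mx -sE mulmx_suml dotp_sumr big1_seq // => x /andP [_ xE].
  have [[xx xa] _] := PE x xE.
  rewrite -xx -mulmxA dotp_adj xa.
  by case: (H x xE) => ->; rewrite ?dotp0l ?dotp0r.
move=> H0; have [Po Pn] := projv_orth (proj1 Hc).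
have [e [Pe Ee]] := exp_of Po Pn.
exists e => x [/(stdO_rep _ _ Hc) [xE xc] /(stdO_rep _ _ Hd) [_ xd]].
case: (Ee x xE) => Hx; subst x.
  by apply: xd; rewrite projv_mul H0 scale0r.
by apply: xc; rewrite mulmxBl mul1mx projv_mul (proj1 Hc) scale1r subrr.
Qed.

Lemma pred_ext {T} (P Q : T -> Prop) : (forall x, P x <-> Q x) -> P = Q.
Proof. move=> H; apply: functional_extensionality => x; exact: propositional_extensionality. Qed.

Lemma orth_sym {St Ex Out} (O : Ex -> St -> Out -> Prop) p q : orth O p q -> orth O q p.
Proof. by move=> [e He]; exists e => x [H1 H2]; apply: (He x). Qed.

Lemma sperp_anti {St Ex Out} (O : Ex -> St -> Out -> Prop) (K K' : St -> Prop) p :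
  (forall q, K q -> K' q) -> sperp O K' p -> sperp O K p.
Proof. by move=> H Hp q Kq; apply: Hp; apply: H. Qed.

Lemma sub_cl {St Ex Out} (O : Ex -> St -> Out -> Prop) (K : St -> Prop) p :
  K p -> sperp O (sperp O K) p.
Proof. by move=> Kp q Hq; apply: orth_sym; apply: Hq. Qed.

Lemma sperp3 {St Ex Out} (O : Ex -> St -> Out -> Prop) (K : St -> Prop) :
  sperp O (sperp O (sperp O K)) = sperp O K.
Proof.
apply: pred_ext => p; split.
  by apply: sperp_anti => q; apply: sub_cl.
exact: sub_cl.
Qed.

Lemma F_orth_sperp {St Ex Out} (O : Ex -> St -> Out -> Prop) (K : St -> Prop) :
  F_orth O (sperp O K).
Proof. exact: sperp3. Qed.

Definition scl {n} (M : 'cV[CC]_n -> Prop) := forall a v, M v -> M (a *: v).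

Lemma vperp_scl {n} (L : 'cV[CC]_n -> Prop) : scl (vperp L).
Proof. by move=> a v Hv u Lu; rewrite dotpZr Hv // mulr0. Qed.

Lemma vecs_pbar {n} (M : 'cV[CC]_n -> Prop) : scl M ->
  vecs_of (pbar_set M) = (fun u => unitv u /\ M u).
Proof.
move=> HM; apply: pred_ext => u; split.
  move=> [s [[c [Mc Hc]] Hu]]; split; first exact: (proj1 Hu).
  by have [a ->] := pbar_unique Hc Hu; apply: HM.
move=> [Hu Mu]; exists (mkstate Hu); split; last exact: mkstateP.
by exists u; split => //; apply: mkstateP.
Qed.

Lemma vperp_unit {n} (M : 'cV[CC]_n -> Prop) : scl M ->
  vperp (fun u => unitv u /\ M u) = vperp M.
Proof.
move=> HM; apply: pred_ext => v; split; last by move=> H u [_ Mu]; apply: H.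
move=> H m Mm; case: (eqVneq m 0) => [->|m0]; first by rewrite dotp0l.
have [a [a0 Ha]] := normalize (elimN eqP m0).
have -> : m = a^-1 *: (a *: m) by rewrite scalerA mulVf // scale1r.
by rewrite dotpZl H ?mulr0 //; split => //; apply: HM.
Qed.

Lemma part1a {n} (K : state n -> Prop) :
  sperp (@stdO n) K = pbar_set (vperp (vecs_of K)).
Proof.
apply: pred_ext => s; split.
  move=> Hs; have [c Hc] := state_rep s; exists c; split => //.
  move=> u [t [Kt Hu]]; apply: dotp_eq0C.
  by apply/(orth_iff Hc Hu); apply: Hs.
move=> [c [Hc Hcs]] t Kt; have [d Hd] := state_rep t.
apply/(orth_iff Hcs Hd); apply: dotp_eq0C; apply: Hc; by exists t.
Qed.

Lemma part1b {n} (K : state n -> Prop) :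
  cl_orth (@stdO n) K = pbar_set (vcl (vecs_of K)).
Proof.
rewrite /cl_orth (part1a (sperp _ K)) (part1a K) vecs_pbar ?vperp_unit //;
  exact: vperp_scl.
Qed.

Lemma projv_c0 {n} (w c : 'cV[CC]_n) : unitv w -> (projv w *m c = 0 <-> dotp w c = 0).
Proof.
move=> Hw; rewrite projv_mul; split; last by move=> ->; rewrite scale0r.
move/eqP; rewrite scaler_eq0 => /orP [/eqP //|/eqP H]; by case: (unitv_neq0 Hw).
Qed.

Lemma eig_sperp {n} (e : experiment n) (A : 'M[CC]_n -> Prop) :
  eig (@stdO n) e A = sperp (@stdO n) (fun t => exists P, P \in sval e /\ ~ A P /\
     exists d, is_pbar d t /\ P *m d = d).
Proof.
have [uE PE OE sE] := proj2_sig e.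
apply: pred_ext => s; have [c Hc] := state_rep s; split.
  move=> Hs t [P [Pe [nAP [d [Hd Pd]]]]].
  apply/(orth_iff Hc Hd).
  have [[PP PA] _] := PE P Pe.
  have Pc : P *m c = 0.
    apply: NNPP => Pc; apply: nAP; apply: Hs; exact/(stdO_rep _ _ Hc).
  by rewrite -Pd dotp_adj PA Pc dotp0l.
move=> Hs x /(stdO_rep _ _ Hc) [xe xc]; apply: NNPP => nA.
have [[xx xa] _] := PE x xe.
have [a [a0 Ha]] := normalize xc.
have xd : x *m (a *: (x *m c)) = a *: (x *m c) by rewrite -scalemxAr mulmxA xx.
have := Hs (mkstate Ha) (ex_intro _ x (conj xe (conj nA (ex_intro _ _ (conj (mkstateP Ha) xd))))).
move/(orth_iff Hc (mkstateP Ha)); rewrite dotpZr => /eqP; rewrite mulf_eq0 (negPf a0) /=.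
rewrite -{1}xx -mulmxA dotp_adj xa => /eqP /dotp_eq0; exact: xc.
Qed.

Lemma part3a {n} (K : state n -> Prop) : F_eig (@stdO n) K -> F_orth (@stdO n) K.
Proof.
move=> [FF [HFF ->]]; rewrite /F_orth /cl_orth; apply: pred_ext => s; split; last first.
  exact: sub_cl.
move=> Hs X FX; have [e [A [_ HX]]] := HFF X FX.
rewrite HX eig_sperp -sperp3 => q Hq; apply: Hs => r Hr; apply: Hq.
by rewrite -eig_sperp -HX; exact: (Hr _ FX).
Qed.

Lemma part3b {n} (K : state n -> Prop) : F_orth (@stdO n) K -> F_eig (@stdO n) K.
Proof.
move=> HK.
exists (fun X => exists t w (e : experiment n), sperp (@stdO n) K t /\ is_pbar w t /\
   projv w \in sval e /\ X = eig (@stdO n) e (fun x => outcomes (@stdO n) e x /\ x <> projv w)).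
split.
  move=> X [t [w [e [_ [_ [_ ->]]]]]]; exists e; eexists; split; last reflexivity.
  by move=> x [].
rewrite -{1}HK; apply: pred_ext => s; have [c Hc] := state_rep s; split.
  move=> Hs X [t [w [e [Ht [Hw [Pe ->]]]]]] x Hx; split; first by exists s.
  move=> E; subst x; move: Hx => /(stdO_rep _ _ Hc) [_].
  apply; apply/(projv_c0 _ (proj1 Hw)); apply: dotp_eq0C.
  by apply/(orth_iff Hc Hw); apply: Hs.
move=> Hs t Ht; have [w Hw] := state_rep t.
have [Po Pn] := projv_orth (proj1 Hw).
have [e [Pe _]] := exp_of Po Pn.
have := Hs _ (ex_intro _ t (ex_intro _ w (ex_intro _ e (conj Ht (conj Hw (conj Pe erefl)))))).
move=> Hx; apply/(orth_iff Hc Hw); apply: NNPP => Hcw.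
have : stdO e s (projv w).
  apply/(stdO_rep _ _ Hc); split => //.
  move/(projv_c0 _ (proj1 Hw))/dotp_eq0C; exact: Hcw.
by move/Hx => [].
Qed.

Lemma sub_sum {n} (L : 'cV[CC]_n -> Prop) (I : Type) (r : seq I) (F : I -> 'cV[CC]_n) :
  subspace L -> (forall i, L (F i)) -> L (\sum_(i <- r) F i).
Proof.
move=> [L0 LD] HF; elim: r => [|x r IH]; first by rewrite big_nil.
by rewrite big_cons -[F x]scale1r; apply: LD.
Qed.

Lemma in_span {n k} (L : 'cV[CC]_n -> Prop) (B : 'M[CC]_(k, n)) v :
  subspace L -> (forall i, L (row i B)^T) -> (v^T <= B)%MS -> L v.
Proof.
move=> HL HB /submxP [x Hx].
have -> : v = \sum_(i < k) x 0 i *: (row i B)^T.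
  apply/matrixP => i j; rewrite (ord1 j) summxE.
  have := congr1 (fun M : 'M[CC]_(1, n) => M 0 i) Hx; rewrite !mxE /= => ->.
  by apply: eq_bigr => l _; rewrite !mxE.
apply: sub_sum => // i; rewrite -[_ *: _]addr0; apply: (proj2 HL) => //.
exact: (proj1 HL).
Qed.

Lemma row1_id {n} (M : 'M[CC]_(1, n)) (j : 'I_1) : row j M = M.
Proof. by apply/matrixP => a b; rewrite (ord1 a) (ord1 j) mxE. Qed.

Lemma extend {n k} (L : 'cV[CC]_n -> Prop) (A : 'M[CC]_(k, n)) v :
  (forall i, L (row i A)^T) -> \rank A = k -> L v -> ~ (v^T <= A)%MS ->
  (forall i, L (row i (col_mx A v^T))^T) /\ \rank (col_mx A v^T) = (k + 1)%N.
Proof.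
move=> HA rA Lv nv; split.
  by move=> i; rewrite -(splitK i); case: (split i) => j /=;
       rewrite ?rowKu ?rowKd ?row1_id ?trmxK //.
apply/eqP; rewrite eqn_leq rank_leq_row /=.
suff lt : (\rank A < \rank (col_mx A v^T))%N.
  rewrite rA in lt; apply: (@leq_trans k.+1) => //; by rewrite addn1.
have := ltmxErank A (col_mx A v^T); rewrite ltmxE col_mx_sub submx_refl.
have -> : (v^T <= A)%MS = false by apply/negbTE/negP.
have -> : (A <= col_mx A v^T)%MS.
  by apply/submxP; exists (row_mx 1%:M 0); rewrite mul_row_col mul1mx mul0mx addr0.
by move=> /esym /andP [].
Qed.

Lemma span_step {n} (L : 'cV[CC]_n -> Prop) : subspace L -> forall m k (A : 'M[CC]_(k, n)),
  (forall i, L (row i A)^T) -> \rank A = k -> (n - k <= m)%N ->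
  exists j (B : 'M[CC]_(j, n)), (forall i, L (row i B)^T) /\ (forall v, L v -> (v^T <= B)%MS).
Proof.
move=> HL; elim=> [|m IH] k A HA rA Hm;
  (case: (classic (forall v, L v -> (v^T <= A)%MS)) => Hall; first by exists k, A);
  (have [v [Lv nv]] : exists v, L v /\ ~ (v^T <= A)%MS
    by apply: NNPP => H; apply: Hall => v Lv; apply: NNPP => nv; apply: H; exists v);
  have [HA' rA'] := extend HA rA Lv nv.
- have := rank_leq_col (col_mx A v^T); rewrite rA'; lia.
- apply: (IH _ _ HA' rA'); lia.
Qed.

Lemma span_exists {n} (L : 'cV[CC]_n -> Prop) : subspace L ->
  exists j (B : 'M[CC]_(j, n)), (forall i, L (row i B)^T) /\ (forall v, L v -> (v^T <= B)%MS).
Proof.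
move=> HL; apply: (span_step HL (m := n) (A := (0 : 'M[CC]_(0, n)))) => //.
- by case.
- by apply/eqP; rewrite -leqn0 rank_leq_row.
- exact: leq_subr.
Qed.

Lemma conj_mxK {m k} (M : 'M[CC]_(m, k)) : map_mx Num.conj (map_mx Num.conj M) = M.
Proof. by apply/matrixP => i j; rewrite !mxE conjCK. Qed.

Lemma perpperp {n} (L : 'cV[CC]_n -> Prop) v : subspace L -> vperp (vperp L) v -> L v.
Proof.
move=> HL Hv; have [j [B [HB HBL]]] := span_exists HL.
set Bc := map_mx Num.conj B.
set Kr := kermx Bc^T.
have KB : Kr *m Bc^T = 0 by apply: mulmx_ker.
have S1 : forall i, vperp L (row i Kr)^T.
  move=> i u Lu; have /submxP [x Hx] := HBL u Lu.
  have -> : dotp u (row i Kr)^T = (adjv u *m (row i Kr)^T) 0 0 by rewrite adjv_mul mxE eqxx.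
  have -> : adjv u = map_mx Num.conj x *m Bc.
    by rewrite /adjv map_trmx Hx map_mxM.
  rewrite -mulmxA.
  have -> : Bc *m (row i Kr)^T = (row i Kr *m Bc^T)^T by rewrite trmx_mul trmxK.
  by rewrite -row_mul KB row0 trmx0 mulmx0 mxE.
set Z := kermx (map_mx Num.conj Kr)^T.
have S2 : (v^T <= Z)%MS.
  apply/sub_kermxP; apply: trmx_inj; rewrite trmx_mul trmxK trmx0.
  apply/matrixP => i l; rewrite (ord1 l) !mxE.
  transitivity (dotp (row i Kr)^T v); last exact: Hv _ (S1 i).
  by rewrite /dotp; apply: eq_bigr => a _; rewrite !mxE.
have S3 : (B <= Z)%MS.
  apply/sub_kermxP; rewrite -[_ *m _]conj_mxK.
  have -> : map_mx Num.conj (B *m (map_mx Num.conj Kr)^T) = Bc *m Kr^T.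
    apply/matrixP => a b; rewrite !mxE rmorph_sum; apply: eq_bigr => l _.
    by rewrite !mxE rmorphM /= conjCK.
  have : (Kr *m Bc^T)^T = 0 by rewrite KB trmx0.
  rewrite trmx_mul trmxK => ->.
  by apply/matrixP => a b; rewrite !mxE rmorph0.
have rZ : \rank Z = \rank B.
  rewrite /Z mxrank_ker mxrank_tr.
  rewrite (mxrank_map Num.Def.conjC Kr) /Kr mxrank_ker mxrank_tr.
  rewrite (mxrank_map Num.Def.conjC B).
  have := rank_leq_col B; lia.
have := mxrank_leqif_eq S3; rewrite rZ => /leqif_refl /esym/eqP eBZ.
apply: (in_span HL HB); rewrite (submx_trans S2) //.
by case/andP: eBZ.
Qed.

Lemma part2 {n} (L : 'cV[CC]_n -> Prop) : closed_subspace L -> F_orth (@stdO n) (pbar_set L).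
Proof.
move=> [HL _].
have sL : scl L by move=> a v Lv; rewrite -[_ *: _]addr0; apply: (proj2 HL) => //; exact: (proj1 HL).
rewrite /F_orth part1b vecs_pbar // /vcl vperp_unit //.
congr pbar_set; apply: pred_ext => v; split; first exact: perpperp.
by move=> Lv w Hw; apply: dotp_eq0C; apply: Hw.
Qed.

Theorem mainTheorem17 (n : nat) :
  (forall K : state n -> Prop,
     sperp (@stdO n) K = pbar_set (vperp (vecs_of K)) /\
     cl_orth (@stdO n) K = pbar_set (vcl (vecs_of K))) /\
  (forall L : 'cV[CC]_n -> Prop,
     closed_subspace L -> F_orth (@stdO n) (pbar_set L)) /\
  (forall K : state n -> Prop, F_eig (@stdO n) K <-> F_orth (@stdO n) K).
Proof.
split; first by move=> K; split; [exact: part1a | exact: part1b].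
split; first by move=> L; exact: part2.
by move=> K; split; [exact: part3a | exact: part3b].
Qed.
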